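(* Let $G$ be the corresponding graph of an array $A$ with reach one, let $F$ be a resulting DFS forest of $G$, and let $T$ be any component of $F$. Then the root of $T$ has at most two outgoing arcs, every leaf of $T$ has at most one incoming arc, and every internal vertex of $T$ has exactly one incoming and exactly one outgoing arc.
   Context: An array is a finite sequence $A=(A[1],\dots,A[n])$ of pairwise distinct real numbers. The corresponding graph of $A$ with reach one is the directed graph on $\{1,\dots,n\}$ with an arc $(i,j)$ whenever $j\equiv i\pm1\pmod n$, $j\ne i$, and $A[i]<A[j]$ (indices cyclic). The resulting DFS forest of a directed graph is the spanning subgraph consisting of exactly the arcs $(\mathrm{parent}(w),w)$ along which depth-first search discovers new vertices; components are connected components of the underlying undirected graph, and each is a rooted tree whose root is the vertex with no incoming arc. A leaf of a rooted tree is an end-vertex (degree-one vertex) of the tree; an internal vertex is a vertex that is neither the root nor a leaf. *)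

(* Defs.v *)
From HB Require Import structures.
From Stdlib Require Import Relations.
From mathcomp Require Import all_boot all_order all_algebra.
From mathcomp Require Import reals.
Set Implicit Arguments. Unset Strict Implicit. Unset Printing Implicit Defensive.
Import Order.TTheory GRing.Theory Num.Theory.

Definition cyc_adj (n : nat) (i j : 'I_n) : bool :=
  (j != i) && ((val j == (val i).+1 %% n) || (val i == (val j).+1 %% n)).

(* The corresponding graph of A with reach one: arc (i,j) iff
   i, j cyclically adjacent and A[i] < A[j]. *)
Definition corr_graph (R : realType) (n : nat) (A : 'I_n -> R) : rel 'I_n :=
  fun i j => cyc_adj i j && (A i < A j)%R.

(* DFS state: (visited set, stack (top first), discovered tree arcs). *)
Definition dfs_state (n : nat) : Type :=
  ({set 'I_n} * seq 'I_n * seq ('I_n * 'I_n))%type.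

(* One nondeterministic step of depth-first search (any vertex order and
   any neighbour order are allowed). *)
Inductive dfs_step (n : nat) (G : rel 'I_n) : dfs_state n -> dfs_state n -> Prop :=
| DfsRoot (vis : {set 'I_n}) (Fs : seq ('I_n * 'I_n)) (v : 'I_n) :
    v \notin vis ->
    dfs_step G (vis, [::], Fs) (v |: vis, [:: v], Fs)
| DfsDiscover (vis : {set 'I_n}) (u : 'I_n) (st : seq 'I_n) (Fs : seq ('I_n * 'I_n)) (w : 'I_n) :
    G u w -> w \notin vis ->
    dfs_step G (vis, u :: st, Fs) (w |: vis, w :: u :: st, rcons Fs (u, w))
| DfsRetreat (vis : {set 'I_n}) (u : 'I_n) (st : seq 'I_n) (Fs : seq ('I_n * 'I_n)) :
    (forall w, G u w -> w \in vis) ->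
    dfs_step G (vis, u :: st, Fs) (vis, st, Fs).

Definition dfs_forest (n : nat) (G : rel 'I_n) (F : rel 'I_n) : Prop :=
  exists Fs : seq ('I_n * 'I_n),
    clos_refl_trans (dfs_state n) (@dfs_step n G)
      (set0, [::], [::] : seq ('I_n * 'I_n)) ([set: 'I_n], [::], Fs) /\
    (forall u w, F u w = ((u, w) \in Fs)).

Definition undirected (n : nat) (F : rel 'I_n) : rel 'I_n :=
  fun u w => F u w || F w u.
Definition component (n : nat) (F : rel 'I_n) (x : 'I_n) : {set 'I_n} :=
  [set y | connect (undirected F) x y].

Definition indeg (n : nat) (F : rel 'I_n) (v : 'I_n) : nat := #|[set u | F u v]|.
Definition outdeg (n : nat) (F : rel 'I_n) (v : 'I_n) : nat := #|[set w | F v w]|.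
Definition tdeg (n : nat) (F : rel 'I_n) (v : 'I_n) : nat :=
  #|[set w | undirected F v w]|.

Definition is_root (n : nat) (F : rel 'I_n) (T : {set 'I_n}) (v : 'I_n) : Prop :=
  v \in T /\ indeg F v = 0.
Definition is_leaf (n : nat) (F : rel 'I_n) (T : {set 'I_n}) (v : 'I_n) : Prop :=
  v \in T /\ tdeg F v = 1.
Definition is_internal (n : nat) (F : rel 'I_n) (T : {set 'I_n}) (v : 'I_n) : Prop :=
  v \in T /\ ~ is_root F T v /\ ~ is_leaf F T v.

(* Main.v *)
Require Import Defs.
From HB Require Import structures.
From Stdlib Require Import Relations.
From mathcomp Require Import all_boot all_order all_algebra.
From mathcomp Require Import reals.
From mathcomp Require Import zify.
Set Implicit Arguments. Unset Strict Implicit. Unset Printing Implicit Defensive.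
Import Order.TTheory GRing.Theory Num.Theory.

Definition dinv (n : nat) (G : rel 'I_n) (s : dfs_state n) : Prop :=
  let: (vis, _, Fs) := s in
  all (fun p => G p.1 p.2) Fs /\ {subset map snd Fs <= vis} /\ uniq (map snd Fs).

Lemma dinv_step n (G : rel 'I_n) s s' : dfs_step G s s' -> dinv G s -> dinv G s'.
Proof.
case=> [vis Fs v _ | vis u st Fs w Guw wn | vis u st Fs _] //=.
- move=> [H1 [H2 H3]]; split=> //; split=> // y Hy.
  by rewrite in_setU1 H2 ?orbT.
- move=> [H1 [H2 H3]]; split; first by rewrite all_rcons /= Guw.
  rewrite map_rcons rcons_uniq H3 andbT; split.
    move=> y; rewrite mem_rcons inE => /orP[/eqP->|Hy]; first by rewrite setU11.
    by rewrite in_setU1 H2 ?orbT.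
  by apply/negP => /H2; rewrite (negbTE wn).
Qed.

Lemma dinv_rt n (G : rel 'I_n) s s' :
  clos_refl_trans _ (@dfs_step n G) s s' -> dinv G s -> dinv G s'.
Proof.
induction 1 as [x y Hs| x | x y z _ IH1 _ IH2].
- exact: dinv_step Hs.
- by [].
- by move=> H; exact: IH2 (IH1 H).
Qed.

Lemma uniq_snd (n : nat) (s : seq ('I_n * 'I_n)) a b v :
  uniq (map snd s) -> (a, v) \in s -> (b, v) \in s -> a = b.
Proof.
elim: s => [//|[x y] s IH] /= /andP[ny us].
rewrite !inE => /orP[/eqP Ha|Ha] /orP[/eqP Hb|Hb].
- by case: Ha => -> _; case: Hb.
- case: Ha => _ Ha; subst; case/negP: ny; by apply/mapP; exists (b, y).
- case: Hb => _ Hb; subst; case/negP: ny; by apply/mapP; exists (a, y).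
- exact: IH.
Qed.

Lemma cyc_sym n (i j : 'I_n) : cyc_adj i j = cyc_adj j i.
Proof. by rewrite /cyc_adj eq_sym orbC. Qed.

Lemma cyc_card n (v : 'I_n) : #|[set j | cyc_adj v j]| <= 2.
Proof.
have sub : [set j | cyc_adj v j] \subset
  [set j : 'I_n | val j == (val v).+1 %% n] :|: [set j : 'I_n | val v == (val j).+1 %% n].
  by apply/subsetP => j; rewrite !inE /cyc_adj => /andP[_ ->].
apply: (leq_trans (subset_leq_card sub)); apply: (leq_trans (leq_card_setU _ _)).
have -> : 2 = 1 + 1 by [].
apply: leq_add; apply/card_le1_eqP => a b; rewrite !inE.
- by move=> /eqP ha /eqP hb; apply: val_inj; rewrite ha hb.
- move=> /eqP ha /eqP hb; apply: val_inj.
  have la := ltn_ord a; have lb := ltn_ord b.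
  move: ha hb; rewrite /=.
  move: (nat_of_ord a) (nat_of_ord b) la lb => a' b' la lb.
  case: (ltnP a'.+1 n) => Ha; case: (ltnP b'.+1 n) => Hb.
  + by rewrite !modn_small // => -> [].
  + have E : b'.+1 = n by apply/eqP; rewrite eqn_leq Hb lb.
    rewrite E modnn modn_small // => -> //.
  + have E : a'.+1 = n by apply/eqP; rewrite eqn_leq Ha la.
    rewrite E modnn modn_small // => -> //.
  + have E : a'.+1 = n by apply/eqP; rewrite eqn_leq Ha la.
    have E' : b'.+1 = n by apply/eqP; rewrite eqn_leq Hb lb.
    by move=> _ _; apply/eqP; rewrite -eqSS E E'.
Qed.

Theorem proposition2 (R : realType) (n : nat) (A : 'I_n -> R)
    (HA : injective A) (F : rel 'I_n)
    (HF : dfs_forest (corr_graph A) F) (x : 'I_n) :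
  (forall r, is_root F (component F x) r -> outdeg F r <= 2) /\
  (forall v, is_leaf F (component F x) v -> indeg F v <= 1) /\
  (forall v, is_internal F (component F x) v ->
     indeg F v = 1 /\ outdeg F v = 1).
Proof.
case: HF => Fs [Hrt HFs].
have [H1 [_ H3]] : dinv (corr_graph A) ([set: 'I_n], [::], Fs).
  apply: (dinv_rt Hrt); by rewrite /dinv /=.
have FG u w : F u w -> corr_graph A u w.
  by rewrite HFs => H; exact: (allP H1 (u, w) H).
have indle v : indeg F v <= 1.
  apply/card_le1_eqP => a b; rewrite !inE !HFs => ha hb; exact: (uniq_snd H3 hb ha).
have outle v : outdeg F v <= 2.
  apply: leq_trans (cyc_card v); apply: subset_leq_card; apply/subsetP => w.
  by rewrite !inE => /FG /andP[].
split; first by move=> r _; apply: outle.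
split; first by move=> v _; apply: indle.
move=> v [vT [nr nl]].
have ind1 : indeg F v = 1.
  have := indle v; case E: (indeg F v) => [|[|k]] // _.
  by case: nr.
split=> //.
have [p Pp] : exists p, F p v.
  have : 0 < indeg F v by rewrite ind1.
  rewrite /indeg card_gt0 => /set0Pn [p].
  by rewrite inE; exists p.
have outge : outdeg F v != 0.
  apply/negP => /eqP o0; apply: nl; split=> //.
  rewrite /tdeg -ind1 /indeg.
  have -> : [set w | undirected F v w] = [set u | F u v]; last by [].
  apply/setP => w; rewrite !inE /undirected.
  case E: (F v w) => //=.
  move: o0; rewrite /outdeg => /eqP; rewrite cards_eq0 => /eqP Es.
  by move: (in_set0 w); rewrite -Es inE E.
apply/eqP; rewrite eqn_leq lt0n outge andbT.
rewrite leqNgt; apply/negP => o2.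
have [c1 [c2 [c12 [F1 F2]]]] : exists c1 c2, c1 != c2 /\ F v c1 /\ F v c2.
  move: o2; rewrite /outdeg => /card_gt1P [c1 [c2 [h1 h2 h12]]].
  by exists c1, c2; move: h1 h2; rewrite !inE => -> ->.
have /andP[Cp Ap] := FG _ _ Pp.
have /andP[C1 A1] := FG _ _ F1.
have /andP[C2 A2] := FG _ _ F2.
have : 2 < #|[set j | cyc_adj v j]|.
  have sub : p |: [set c1; c2] \subset [set j | cyc_adj v j].
    apply/subsetP => y; rewrite !inE => /orP[/eqP ->|/orP[] /eqP -> //].
    by rewrite cyc_sym.
  apply: leq_trans (subset_leq_card sub).
  rewrite cardsU1 cards2 c12 /= !inE.
  have n1 : p != c1 by apply/eqP => E; subst; move: (lt_trans Ap A1); rewrite ltxx.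
  have n2 : p != c2 by apply/eqP => E; subst; move: (lt_trans Ap A2); rewrite ltxx.
  by rewrite (negbTE n1) (negbTE n2).
by rewrite ltnNge cyc_card.
Qed.
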